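(* Let $L$ be a finite-dimensional pure, nonnilpotent, solvable Lie algebra over $\mathbb{C}$ of breadth $2$ such that $\dim[L,L]=2$ and $\dim L^k=2$ for all integers $k\geq 2$. Then there exists an abelian subalgebra $A$ of $L$ such that $L=A\ltimes[L,L]$ (i.e. $L=A\oplus[L,L]$ as vector spaces, with $[L,L]$ an ideal).
   Context: For $x\in L$, $b(x)=\mathrm{rank}(\mathrm{ad}_x)$ and the breadth of $L$ is $b(L)=\max\{b(x)\mid x\in L\}$. $L$ is pure if it has no abelian ideal as a direct summand; equivalently $Z(L)\subseteq[L,L]$, where $Z(L)$ is the center. The lower central series is indexed by $L^0=L$, $L^1=[L,L]$, $L^k=[L,L^{k-1}]$ for $k\geq 2$. *)

(* Defs.v *)
From HB Require Import structures.
From mathcomp Require Import all_boot all_order all_algebra.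
From mathcomp Require Import reals complex Rstruct.
Set Implicit Arguments. Unset Strict Implicit. Unset Printing Implicit Defensive.
Import Order.TTheory GRing.Theory Num.Theory.
Local Open Scope ring_scope.


Definition Cplx : fieldType := (Rdefinitions.R)[i].

Section Lie.
Variables (F : fieldType) (V : vectType F) (br : V -> V -> V).

Definition is_lie_bracket : Prop :=
  [/\ (forall (a : F) (x y z : V), br (a *: x + y) z = a *: br x z + br y z),
      (forall (a : F) (x y z : V), br x (a *: y + z) = a *: br x y + br x z),
      (forall x : V, br x x = 0) &
      (forall x y z : V, br x (br y z) + br y (br z x) + br z (br x y) = 0)].

Definition brsp (U W : {vspace V}) : {vspace V} :=
  (<<[seq br u w | u <- vbasis U, w <- vbasis W]>>)%VS.

(* Lower central series: L^0 = L, L^1 = [L,L], L^k = [L, L^(k-1)]. *)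
Fixpoint lcs (k : nat) : {vspace V} :=
  if k is k'.+1 then brsp fullv (lcs k') else fullv.

Fixpoint dser (k : nat) : {vspace V} :=
  if k is k'.+1 then brsp (dser k') (dser k') else fullv.

Definition lie_solvable : Prop := exists n, dser n = 0%VS.
Definition lie_nilpotent : Prop := exists n, lcs n = 0%VS.

Definition subalgebra (U : {vspace V}) : Prop :=
  forall x y, x \in U -> y \in U -> br x y \in U.
Definition ideal (U : {vspace V}) : Prop :=
  forall x y, y \in U -> br x y \in U.
Definition abelian_sub (U : {vspace V}) : Prop :=
  forall x y, x \in U -> y \in U -> br x y = 0.

Definition lie_pure : Prop :=
  forall I J : {vspace V}, ideal I -> ideal J -> abelian_sub I ->
    directv (I + J)%VS -> (I + J)%VS = fullv -> I = 0%VS.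

Definition breadth_elt (x : V) : nat := \dim (limg (linfun (br x)))%VS.

Definition has_breadth (n : nat) : Prop :=
  (forall x, breadth_elt x <= n)%N /\ exists x, breadth_elt x = n.

End Lie.

(* Main.v *)
Require Import Defs.
From HB Require Import structures.
From mathcomp Require Import all_boot all_order all_algebra.
From mathcomp Require Import reals complex Rstruct.
Import Order.TTheory GRing.Theory Num.Theory.
Local Open Scope ring_scope.
Set Implicit Arguments. Unset Strict Implicit.

Section S.
Variables (F : fieldType) (V : vectType F) (br : V -> V -> V).
Hypothesis H : is_lie_bracket br.

Lemma linr z : linear (br z).
Proof. by case: H => _ h _ _ a x y; rewrite h. Qed.
Lemma linl z : linear (br^~ z).
Proof. by case: H => h _ _ _ a x y; rewrite h. Qed.
Definition adr z : {linear V -> V} := HB.pack (br z) (GRing.isLinear.Build _ _ _ _ (br z) (linr z)).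
Definition adl z : {linear V -> V} := HB.pack (br^~ z) (GRing.isLinear.Build _ _ _ _ (br^~ z) (linl z)).

Lemma br0r z : br z 0 = 0. Proof. exact: (linear0 (adr z)). Qed.
Lemma br0l z : br 0 z = 0. Proof. exact: (linear0 (adl z)). Qed.
Lemma brDr z x y : br z (x + y) = br z x + br z y. Proof. exact: (linearD (adr z)). Qed.
Lemma brDl z x y : br (x + y) z = br x z + br y z. Proof. exact: (linearD (adl z)). Qed.
Lemma brZr z a x : br z (a *: x) = a *: br z x. Proof. by have := linr z a x 0; rewrite addr0 => ->; rewrite br0r addr0. Qed.
Lemma brZl z a x : br (a *: x) z = a *: br x z. Proof. by have := linl z a x 0; rewrite addr0 => ->; rewrite br0l addr0. Qed.
Lemma brNr z x : br z (- x) = - br z x. Proof. exact: (linearN (adr z)). Qed.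
Lemma brNl z x : br (- x) z = - br x z. Proof. exact: (linearN (adl z)). Qed.
Lemma brBr z x y : br z (x - y) = br z x - br z y. Proof. exact: (linearB (adr z)). Qed.
Lemma brBl z x y : br (x - y) z = br x z - br y z. Proof. exact: (linearB (adl z)). Qed.
Lemma brsumr z n (f : 'I_n -> V) : br z (\sum_i f i) = \sum_i br z (f i).
Proof. exact: (linear_sum (adr z)). Qed.
Lemma brsuml z n (f : 'I_n -> V) : br (\sum_i f i) z = \sum_i br (f i) z.
Proof. exact: (linear_sum (adl z)). Qed.
Lemma brxx x : br x x = 0. Proof. by case: H. Qed.
Lemma jac x y z : br x (br y z) + br y (br z x) + br z (br x y) = 0. Proof. by case: H. Qed.
Lemma brC x y : br x y = - br y x.
Proof.
apply/eqP; rewrite -subr_eq0 opprK.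
have := brxx (x + y); rewrite brDl !brDr !brxx add0r addr0 => ->.
by [].
Qed.

Lemma br_brsp (U W : {vspace V}) x y : x \in U -> y \in W -> br x y \in brsp br U W.
Proof.
move=> xU yW; rewrite (coord_vbasis xU) (coord_vbasis yW) brsuml.
apply: rpred_sum => i _; rewrite brZl brsumr; apply: rpredZ.
apply: rpred_sum => j _; rewrite brZr; apply: rpredZ.
apply: memv_span; apply: allpairs_f; apply: mem_nth; by rewrite size_tuple.
Qed.

Lemma brsp_sub (U W X : {vspace V}) : (forall x y, x \in U -> y \in W -> br x y \in X) -> (brsp br U W <= X)%VS.
Proof.
move=> h; apply/span_subvP => v /allpairsP [[u w] [/= /vbasis_mem uU /vbasis_mem wW ->]].
exact: h.
Qed.

Lemma indep (e1 e2 : V) : e1 != 0 -> e2 \notin <[e1]>%VS ->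
  forall a b, a *: e1 + b *: e2 = 0 -> a = 0 /\ b = 0.
Proof.
move=> ne1 ne2 a b h.
have b0 : b = 0.
  apply/eqP; apply/negPn/negP => nb; case/negP: ne2; apply/vlineP.
  have e : b *: e2 = - (a *: e1) by apply/eqP; rewrite -addr_eq0 addrC h.
  exists (- (b^-1 * a)).
  by rewrite -[e2](scale1r) -(mulVf nb) -scalerA e scalerN scalerA scaleNr.
split=> //; move: h; rewrite b0 scale0r addr0 => /eqP.
by rewrite scaler_eq0 (negbTE ne1) orbF => /eqP.
Qed.

Lemma two_basis (D : {vspace V}) (e1 e2 : V) : \dim D = 2%N -> e1 \in D -> e2 \in D ->
  e1 != 0 -> e2 \notin <[e1]>%VS ->
  forall x, x \in D -> exists a b, x = a *: e1 + b *: e2.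
Proof.
move=> dD e1D e2D ne1 ne2 x xD.
have ne20 : e2 != 0 by apply: contraNneq ne2 => ->; exact: mem0v.
have cap : (<[e1]> :&: <[e2]> = 0)%VS.
  apply/eqP; rewrite -subv0; apply/subvP => y /memv_capP [/vlineP [a ->] /vlineP [b eb]].
  have [-> _] : a = 0 /\ - b = 0 by apply: (indep ne1 ne2); rewrite eb scaleNr subrr.
  by rewrite scale0r mem0v.
have UD : (<[e1]> + <[e2]> <= D)%VS by rewrite subv_add -!memvE e1D e2D.
have : (<[e1]> + <[e2]> == D)%VS.
  by rewrite eqEdim UD dimv_disjoint_sum // !dim_vline ne1 ne20 dD.
move/eqP=> eD; move: xD; rewrite -eD => /memv_addP [u /vlineP [a ->] [v /vlineP [b ->] ->]].
by exists a, b.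
Qed.

Variable D : {vspace V}.
Hypothesis hD2 : \dim D = 2%N.
Hypothesis hLD : brsp br fullv D = D.
Hypothesis brD : forall x y, br x y \in D.

Lemma Gcontra u : (forall z d, d \in D -> br z d \in <[u]>%VS) -> False.
Proof.
move=> h; have : (D <= <[u]>)%VS by rewrite -{1}hLD; apply: brsp_sub => x y _; exact: h.
move/dimvS; rewrite hD2 dim_vline; by case: (u != 0).
Qed.

Ltac mem_tac := repeat (apply: rpredD || apply: rpredZ || rewrite rpredN || apply: memv_line || apply: mem0v).

Lemma abelD d1 d2 : d1 \in D -> d2 \in D -> br d1 d2 = 0.
Proof.
move=> d1D d2D; apply/eqP/negPn/negP => ny.
set y := br d1 d2 in ny.
have nd1 : d1 != 0 by apply: contraNneq ny => e; rewrite /y e br0l.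
have nd2 : d2 \notin <[d1]>%VS.
  by apply: contra ny => /vlineP [c e]; rewrite /y e brZr brxx scaler0.
have dec := two_basis hD2 d1D d2D nd1 nd2.
have DDy : forall a b, a \in D -> b \in D -> br a b \in <[y]>%VS.
  move=> a b /dec [a1 [b1 ->]] /dec [a2 [b2 ->]].
  rewrite brDl !brDr !brZl !brZr !brxx (brC d2 d1) -/y.
  mem_tac.
have [x0 [x0D [al [nal hal]]]] : exists x0, x0 \in D /\ exists al, al != 0 /\ br x0 y = al *: y.
  have [p [q ey]] := dec _ (brD d1 d2).
  have [q0|nq] := eqVneq q 0.
    exists d2; split => //; exists (- p); split.
      by apply: contraNneq ny => /eqP; rewrite oppr_eq0 => /eqP p0; rewrite /y ey p0 q0 !scale0r addr0.
    by rewrite {1}/y ey q0 scale0r addr0 brZr (brC d2 d1) -/y scalerN scaleNr.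
  exists d1; split => //; exists q; split => //.
  by rewrite {1}/y ey brDr !brZr brxx scaler0 add0r.
have yD : y \in D by apply: brD.
have nx0 : x0 \notin <[y]>%VS.
  apply/negP => /vlineP [c ex]; move: hal; rewrite ex brZl brxx scaler0 => /esym/eqP.
  by rewrite scaler_eq0 (negbTE nal) (negbTE ny).
have dec2 := two_basis hD2 yD x0D ny nx0.
apply: (@Gcontra y) => z d /dec2 [p [q ->]].
have [c hc] : exists c, br z y = c *: y.
  apply/vlineP.
  have := jac z d1 d2; rewrite -/y => /eqP; rewrite -addrA addr_eq0 => /eqP ->.
  mem_tac; apply: DDy => //; exact: brD.
have [a [b hb]] := dec2 _ (brD z x0).
have b0 : b = 0.
  have := jac z x0 y; rewrite hal brZr hc (brC y z) hc brNr brZr hal hb brDr !brZr brxx (brC y x0) hal.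
  rewrite scaler0 add0r !scalerN !scalerA (mulrC c al) addrN add0r => /eqP.
  rewrite oppr_eq0 scaler_eq0 (negbTE ny) orbF mulf_eq0 (negbTE nal) orbF => /eqP //.
rewrite brDr !brZr hc hb b0 scale0r addr0; mem_tac.
Qed.

Lemma commD z1 z2 d : d \in D -> br z1 (br z2 d) = br z2 (br z1 d).
Proof.
move=> dD; have := jac z1 z2 d.
rewrite (abelD dD (brD z1 z2)) addr0 (brC d z1) brNr => /eqP; rewrite subr_eq0 => /eqP //.
Qed.

Lemma exists_z0 : exists z0, forall d, d \in D -> br z0 d = 0 -> d = 0.
Proof.
apply: Classical_Prop.NNPP => hn.
have hS : forall z, exists d, [/\ d \in D, d != 0 & br z d = 0].
  move=> z; apply: Classical_Prop.NNPP => hz; apply: hn; exists z => d dD e.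
  apply/eqP/negPn/negP => nd; apply: hz; by exists d.
have [z1 [d0 [d0D nu]]] : exists z1 d0, d0 \in D /\ br z1 d0 != 0.
  apply: Classical_Prop.NNPP => h; apply: (@Gcontra 0) => z d dD.
  have -> : br z d = 0 by apply/eqP/negPn/negP => nz; apply: h; exists z, d.
  exact: mem0v.
set u := br z1 d0 in nu.
have uD : u \in D by apply: brD.
have [k [kD nk hk]] := hS z1.
have nd0 : d0 \notin <[k]>%VS.
  by apply: contra nu => /vlineP [c e]; rewrite /u e brZr hk scaler0.
have decA := two_basis hD2 kD d0D nk nd0.
have img : forall x, x \in D -> br z1 x \in <[u]>%VS.
  move=> x /decA [p [q ->]]; rewrite brDr !brZr hk scaler0 add0r; mem_tac.
have ker : forall x, x \in D -> br z1 x = 0 -> x \in <[k]>%VS.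
  move=> x /decA [p [q ->]]; rewrite brDr !brZr hk scaler0 add0r -/u => /eqP.
  rewrite scaler_eq0 (negbTE nu) orbF => /eqP ->; rewrite scale0r addr0; mem_tac.
have [tu|ntu] := eqVneq (br z1 u) 0.
  (* nilpotent case *)
  have nd0u : d0 \notin <[u]>%VS.
    by apply: contra nu => /vlineP [c e]; rewrite {1}/u e brZr tu scaler0.
  have dec := two_basis hD2 uD d0D nu nd0u.
  apply: (@Gcontra u) => z d /dec [p [q ->]].
  have [a ha] : exists a, br z u = a *: u.
    by apply/vlineP; rewrite /u -commD //; apply: img; apply: brD.
  have [al [be hR]] := dec _ (brD z d0).
  have ebe : be = a.
    have := commD z1 z d0D; rewrite hR brDr !brZr tu scaler0 add0r -/u ha => /eqP.
    rewrite -subr_eq0 -scalerBl scaler_eq0 (negbTE nu) orbF subr_eq0 => /eqP //.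
  have a0 : a = 0.
    apply/eqP/negPn/negP => na.
    have [x [xD nx hx]] := hS z.
    move: nx hx; have [p' [q' ->]] := dec _ xD.
    rewrite brDr !brZr ha hR ebe scalerDr !scalerA addrA -scalerDl => nx /eqP.
    have nu0 : u != 0 := nu.
    move=> hx; have [h1 h2] := indep nu0 nd0u (eqP hx).
    move: h2 => /eqP; rewrite mulf_eq0 (negbTE na) orbF => /eqP q0.
    move: h1; rewrite q0 mul0r addr0 => /eqP; rewrite mulf_eq0 (negbTE na) orbF => /eqP p0.
    by move: nx; rewrite p0 q0 !scale0r addr0 eqxx.
  rewrite brDr !brZr ha hR ebe a0 !scale0r addr0; mem_tac.
(* invertible-on-image case *)
have nuk : u \notin <[k]>%VS.
  by apply: contra ntu => /vlineP [c e]; rewrite e brZr hk scaler0.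
have [t ht] : exists t, br z1 u = t *: u by apply/vlineP; apply: img.
have nt : t != 0 by apply: contra ntu => /eqP t0; rewrite ht t0 scale0r.
have dec := two_basis hD2 kD uD nk nuk.
apply: (@Gcontra u) => z d /dec [p [q ->]].
have [a ha] : exists a, br z k = a *: k.
  apply/vlineP; apply: ker; first exact: brD.
  by rewrite commD // hk br0r.
have [b hb] : exists b, br z u = b *: u.
  by apply/vlineP; rewrite /u -commD //; apply: img; apply: brD.
have a0 : a = 0.
  apply/eqP/negPn/negP => na.
  have [x [xD nx hx]] := hS z.
  have [y [yD ny hy]] := hS (z1 + z).
  move: nx hx; have [p1 [q1 ->]] := dec _ xD.
  rewrite brDr !brZr ha hb !scalerA => nx hx.
  have [h1 h2] := indep nk nuk hx.
  move: h1 => /eqP; rewrite mulf_eq0 (negbTE na) orbF => /eqP p10.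
  move: nx; rewrite p10 scale0r add0r scaler_eq0 (negbTE nu) orbF => nq1.
  move: h2 => /eqP; rewrite mulf_eq0 (negbTE nq1) /= => /eqP b0.
  move: ny hy; have [p2 [q2 ->]] := dec _ yD.
  rewrite brDl !brDr !brZr ha hb hk ht b0 !scalerA scaler0 mulr0 scale0r add0r addr0 => ny; rewrite addrC => hy.
  have [h1 h2] := indep nk nuk hy.
  move: h1 => /eqP; rewrite mulf_eq0 (negbTE na) orbF => /eqP p20.
  move: ny; rewrite p20 scale0r add0r scaler_eq0 (negbTE nu) orbF => nq2.
  move: h2 => /eqP; rewrite mulf_eq0 (negbTE nq2) /=.
  by rewrite (negbTE nt).
rewrite brDr !brZr ha hb a0 scale0r scaler0 add0r; mem_tac.
Qed.
End S.

Unset Implicit Arguments.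

Theorem proposition3p8 (V : vectType Cplx) (br : V -> V -> V) :
  is_lie_bracket br ->
  lie_pure br -> ~ lie_nilpotent br -> lie_solvable br ->
  has_breadth br 2 ->
  \dim (lcs br 1) = 2%N ->
  (forall k : nat, (2 <= k)%N -> \dim (lcs br k) = 2%N) ->
  exists A : {vspace V},
    subalgebra br A /\ abelian_sub br A /\
    ideal br (lcs br 1) /\
    directv (A + lcs br 1)%VS /\ (A + lcs br 1)%VS = fullv.
Proof.
move=> H _ _ _ _ h1 hk.
set D := lcs br 1.
have brD : forall x y, br x y \in D by move=> x y; apply: (br_brsp H); apply: memvf.
have hLD : brsp br fullv D = D.
  apply/eqP; rewrite eqEdim; apply/andP; split.
    by apply: brsp_sub => x y _ _; apply: brD.
  by rewrite h1 -(hk 2%N) //.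
have [z0 hz0] := exists_z0 H h1 hLD brD.
pose A := lker (linfun (adr H z0)).
have memA : forall x, (x \in A) = (br z0 x == 0) by move=> x; rewrite memv_ker lfunE.
have ab : abelian_sub br A.
  move=> x y; rewrite !memA => /eqP hx /eqP hy.
  apply: hz0; first exact: brD.
  have := jac H z0 x y.
  rewrite hx (br0r H) addr0. rewrite [br y z0](brC H). by rewrite hy oppr0 (br0r H) addr0.
have capA : (A :&: D = 0)%VS.
  apply/eqP; rewrite -subv0; apply/subvP => x /memv_capP [xA xD].
  by rewrite memv0; apply/eqP; apply: hz0 => //; apply/eqP; rewrite -memA.
exists A; split.
  by move=> x y xA yA; rewrite (ab x y xA yA) mem0v.
split => //; split; first by move=> x y _; apply: brD.
split; first exact/directv_addP.
apply/eqP; rewrite eqEdim subvf /= dimv_disjoint_sum //.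
have := limg_ker_dim (linfun (adr H z0)) fullv.
rewrite capfv -/A => <-.
rewrite leq_add2l h1 -h1; apply: dimvS; apply/subvP => w /memv_imgP [v _ ->].
by rewrite lfunE; apply: brD.
Qed.
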